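(* Let $\mathcal{C}$ be a non-empty k-category and $\mathcal{D}$ a perfect k-category. Then the k-category $\mathrm{Func}(\mathcal{C},\mathcal{D})$ is perfect.
   Context: A k-category is a small category whose object and morphism sets are k-spaces (compactly generated Hausdorff) such that the source, target, identity and composition maps are continuous (products in the category of k-spaces). A non-empty k-category $\mathcal{C}$ is perfect when the map $\mathrm{Mor}(\mathcal{C})\to\mathrm{Ob}(\mathcal{C})\times\mathrm{Ob}(\mathcal{C})$, $f\mapsto(\text{source}(f),\text{target}(f))$, is a homeomorphism. $\mathrm{Func}(\mathcal{C},\mathcal{D})$ is the k-category whose objects are the continuous functors $\mathcal{C}\to\mathcal{D}$, topologized as a subspace of the k-space $\mathrm{Mor}(\mathcal{D})^{\mathrm{Mor}(\mathcal{C})}$, and whose morphisms are continuous natural transformations, topologized as a closed subspace of $\mathrm{Ob}(\mathrm{Func})\times\mathrm{Ob}(\mathrm{Func})\times\mathrm{Mor}(\mathcal{D})^{\mathrm{Ob}(\mathcal{C})}$. *)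

(* Defs.v *)
(* Stdlib/MathComp-classical world: topologies are given explicitly as
   predicates on subsets ("the open sets"), so that k-ifications, k-products,
   subspaces and compact-open function spaces can be built on arbitrary types. *)
From Stdlib Require Lists.List.
From mathcomp Require Import all_boot.
From mathcomp Require Import boolp classical_sets.
Set Implicit Arguments. Unset Strict Implicit. Unset Printing Implicit Defensive.
Local Open Scope classical_set_scope.

Definition topology (T : Type) := set T -> Prop.

Definition is_topology T (o : topology T) : Prop :=
  o setT /\ (forall U V, o U -> o V -> o (U `&` V)) /\
  (forall F : set (set T), (forall U, F U -> o U) -> o (\bigcup_(U in F) U)).

Definition cont S T (oS : topology S) (oT : topology T) (f : S -> T) : Prop :=
  forall V, oT V -> oS (f @^-1` V).

Definition homeo S T (oS : topology S) (oT : topology T) (f : S -> T) : Prop :=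
  exists g : T -> S, cancel f g /\ cancel g f /\ cont oS oT f /\ cont oT oS g.

Definition compact_in T (o : topology T) (K : set T) : Prop :=
  forall C : set (set T), (forall U, C U -> o U) -> K `<=` \bigcup_(U in C) U ->
  exists s : seq (set T), (forall U, Stdlib.Lists.List.In U s -> C U) /\
    K `<=` (fun x => exists2 U, Stdlib.Lists.List.In U s & U x).

Definition hausdorff T (o : topology T) : Prop :=
  forall x y : T, x <> y -> exists U V, [/\ o U, o V, U x, V y &
    forall z, ~ (U z /\ V z)].

Definition is_kspace T (o : topology T) : Prop :=
  [/\ is_topology o, hausdorff o &
      forall U, (forall K, compact_in o K -> exists2 V, o V & U `&` K = V `&` K) -> o U].

Definition kfy T (o : topology T) : topology T :=
  fun U => forall K, compact_in o K -> exists2 V, o V & U `&` K = V `&` K.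

Definition gen_top T (S : set (set T)) : topology T :=
  fun U => forall x, U x -> exists s : seq (set T),
    [/\ forall V, Stdlib.Lists.List.In V s -> S V, forall V, Stdlib.Lists.List.In V s -> V x &
        (fun y => forall V, Stdlib.Lists.List.In V s -> V y) `<=` U].

Definition induced S T (i : S -> T) (oT : topology T) : topology S :=
  fun U => exists2 V, oT V & U = i @^-1` V.

Definition prod_top A B (oA : topology A) (oB : topology B) : topology (A * B) :=
  gen_top (fun W => (exists2 U, oA U & W = (fun p => U p.1)) \/
                    (exists2 V, oB V & W = (fun p => V p.2))).

Definition kprod A B (oA : topology A) (oB : topology B) : topology (A * B) :=
  kfy (prod_top oA oB).

Definition ksub S T (i : S -> T) (oT : topology T) : topology S := kfy (induced i oT).

Definition cmap X Y (oX : topology X) (oY : topology Y) :=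
  {f : X -> Y | cont oX oY f}.

Definition cmap_top X Y (oX : topology X) (oY : topology Y) : topology (cmap oX oY) :=
  kfy (gen_top (fun W => exists K U, [/\ compact_in oX K, oY U &
        W = (fun f : cmap oX oY => forall x, K x -> U (sval f x))])).

(** k-categories.  [comp f g] is "g after f", meaningful when [tgt f = src g]. *)
Record kcat := KCat {
  Ob : Type; Mor : Type;
  topOb : topology Ob; topMor : topology Mor;
  src : Mor -> Ob; tgt : Mor -> Ob; idm : Ob -> Mor;
  comp : Mor -> Mor -> Mor }.

Arguments topOb k : clear implicits. Arguments topMor k : clear implicits.
Arguments src {k}. Arguments tgt {k}. Arguments idm {k}. Arguments comp {k}.

Definition kcomposable (C : kcat) := {p : Mor C * Mor C | tgt p.1 = src p.2}.

Definition kcomposable_top (C : kcat) : topology (kcomposable C) :=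
  ksub (fun p : kcomposable C => sval p) (kprod (topMor C) (topMor C)).

Arguments kcomposable_top C : clear implicits.

Definition is_kcat (C : kcat) : Prop :=
  [/\ is_kspace (topOb C), is_kspace (topMor C),
      [/\ cont (topMor C) (topOb C) src, cont (topMor C) (topOb C) tgt,
          cont (topOb C) (topMor C) idm &
          cont (kcomposable_top C) (topMor C)
               (fun p : kcomposable C => comp (sval p).1 (sval p).2)] &
      [/\ forall x : Ob C, src (idm x) = x /\ tgt (idm x) = x,
          forall f g : Mor C, tgt f = src g -> src (comp f g) = src f /\ tgt (comp f g) = tgt g,
          forall f : Mor C, comp (idm (src f)) f = f /\ comp f (idm (tgt f)) = f &
          forall f g h : Mor C, tgt f = src g -> tgt g = src h ->
            comp (comp f g) h = comp f (comp g h)]].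

Definition nonempty_kcat (C : kcat) : Prop := inhabited (Ob C).

(** Perfectness, stated for the underlying data (objects, morphisms, source,
    target) so that it applies both to a kcat and to Func(C,D). *)
Definition perfect_data O M (oO : topology O) (oM : topology M) (s t : M -> O) : Prop :=
  inhabited O /\ homeo oM (kprod oO oO) (fun f => (s f, t f)).

Definition perfect (C : kcat) : Prop :=
  perfect_data (topOb C) (topMor C) src tgt.

Definition is_functor (C D : kcat) (Fo : Ob C -> Ob D) (Fm : Mor C -> Mor D) : Prop :=
  [/\ forall f, src (Fm f) = Fo (src f), forall f, tgt (Fm f) = Fo (tgt f),
      forall x, Fm (idm x) = idm (Fo x) &
      forall f g, tgt f = src g -> Fm (comp f g) = comp (Fm f) (Fm g)].

Record cfunctor (C D : kcat) := CFunctor {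
  fo : Ob C -> Ob D; fm : Mor C -> Mor D;
  fun_ax : is_functor fo fm;
  fo_cont : cont (topOb C) (topOb D) fo;
  fm_cont : cont (topMor C) (topMor D) fm }.

Definition fm_map (C D : kcat) (F : cfunctor C D) : cmap (topMor C) (topMor D) :=
  exist _ (fm F) (fm_cont F).

Definition FuncOb_top (C D : kcat) : topology (cfunctor C D) :=
  ksub (@fm_map C D) (@cmap_top _ _ (topMor C) (topMor D)).

Arguments FuncOb_top C D : clear implicits.

Record ctrans (C D : kcat) := CTrans {
  tdom : cfunctor C D; tcod : cfunctor C D;
  teta : Ob C -> Mor D;
  teta_cont : cont (topOb C) (topMor D) teta;
  teta_src : forall x, src (teta x) = fo tdom x;
  teta_tgt : forall x, tgt (teta x) = fo tcod x;
  teta_nat : forall f, comp (fm tdom f) (teta (tgt f)) = comp (teta (src f)) (fm tcod f) }.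

Definition ctrans_emb (C D : kcat) (t : ctrans C D) :
  (cfunctor C D * cfunctor C D) * cmap (topOb C) (topMor D) :=
  ((tdom t, tcod t), exist _ (teta t) (teta_cont t)).

Definition FuncMor_top (C D : kcat) : topology (ctrans C D) :=
  ksub (@ctrans_emb C D)
       (kprod (kprod (FuncOb_top C D) (FuncOb_top C D)) (@cmap_top _ _ (topOb C) (topMor D))).

Arguments FuncMor_top C D : clear implicits.

(* Main.v *)
Require Import Defs.
From mathcomp Require Import all_boot.
From mathcomp Require Import boolp classical_sets.
Set Implicit Arguments. Unset Strict Implicit.
Local Open Scope classical_set_scope.

Notation LIn := Stdlib.Lists.List.In.

Lemma seteq T (A B : set T) : (forall x, A x <-> B x) -> A = B.
Proof. move=> h; apply: funext => x; apply: propext; exact: h. Qed.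

Section Top.
Variable T : Type.
Variable o : topology T.
Hypothesis ho : is_topology o.

Lemma open_setT : o setT. Proof. by case: ho. Qed.
Lemma open_setI U V : o U -> o V -> o (U `&` V). Proof. by case: ho => _ [h _]; apply: h. Qed.
Lemma open_idx I (P : I -> Prop) (f : I -> set T) :
  (forall i, P i -> o (f i)) -> o (fun y => exists i, P i /\ f i y).
Proof.
move=> h; case: ho => _ [_ hu].
have -> : (fun y => exists i, P i /\ f i y) =
   \bigcup_(U in [set U | exists i, P i /\ U = f i]) U.
  apply: seteq => y; split.
  - by case=> i [pi fi]; exists (f i) => //; exists i.
  - by case=> U [i [pi ->]] fy; exists i.
apply: hu => U [i [pi ->]]; exact: h.
Qed.
Lemma open_set0 : o set0.
Proof.
have -> : (set0 : set T) = (fun y => exists i : False, True /\ set0 y).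
  by apply: seteq => y; split => // [[]].
by apply: open_idx => [[]].
Qed.
Lemma open_bigI X (f : X -> set T) (xs : seq X) :
  (forall x, LIn x xs -> o (f x)) -> o (fun y => forall x, LIn x xs -> f x y).
Proof.
elim: xs => [|x xs IH] h.
  have -> : (fun y => forall x, LIn x [::] -> f x y) = setT by apply: seteq.
  exact: open_setT.
have -> : (fun y => forall z, LIn z (x :: xs) -> f z y) =
   f x `&` (fun y => forall z, LIn z xs -> f z y).
  apply: seteq => y; split.
  - by move=> H; split; [apply: H; left | move=> z hz; apply: H; right].
  - by case=> H1 H2 z [<-|hz] //; apply: H2.
apply: open_setI; first by apply: h; left.
by apply: IH => z hz; apply: h; right.
Qed.
End Top.

Lemma compact_pts T (o : topology T) K (N : T -> set T) :
  compact_in o K -> (forall x, K x -> o (N x) /\ N x x) ->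
  exists xs : seq T, (forall x, LIn x xs -> K x) /\
     K `<=` (fun y => exists x, LIn x xs /\ N x y).
Proof.
move=> cK hN.
have [s [hs cov]] : exists s : seq (set T),
   (forall U, LIn U s -> exists x, K x /\ U = N x) /\
   K `<=` (fun x => exists2 U, LIn U s & U x).
  apply: cK.
  - by move=> U [x [kx ->]]; exact: (hN x kx).1.
  - by move=> y ky; exists (N y); [exists y | exact: (hN y ky).2].
suff [xs [h1 h2]] : exists xs : seq T, (forall x, LIn x xs -> K x) /\
   forall U, LIn U s -> exists x, LIn x xs /\ U = N x.
  exists xs; split => // y /cov [U /h2 [x [hx ->]] nu]; by exists x.
elim: s hs {cov} => [|U s IH] hs; first by exists [::].
have [xs [h1 h2]] := IH (fun V hV => hs V (or_intror hV)).
have [x [kx ex]] := hs U (or_introl erefl).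
exists (x :: xs); split.
- by move=> z [<-|hz] //; apply: h1.
- move=> V [<-|hV]; first by exists x; split => //; left.
  by have [z [hz ->]] := h2 V hV; exists z; split => //; right.
Qed.
Lemma kfy_ge T (o : topology T) U : o U -> kfy o U.
Proof. by move=> oU K _; exists U. Qed.

Lemma cont_kfy_dom X Y (oX : topology X) (oY : topology Y) h :
  cont oX oY h -> cont (kfy oX) oY h.
Proof. by move=> c V oV; apply: kfy_ge; apply: c. Qed.

Lemma cont_comp X Y Z (oX : topology X) (oY : topology Y) (oZ : topology Z) f g :
  cont oX oY f -> cont oY oZ g -> cont oX oZ (fun x => g (f x)).
Proof. by move=> cf cg V oV; apply: (cf _ (cg _ oV)). Qed.

Lemma compact_kfy T (o : topology T) K : compact_in o K -> compact_in (kfy o) K.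
Proof.
move=> cK C hC cov.
have hV : forall U, exists V, C U -> o V /\ U `&` K = V `&` K.
  move=> U; case: (pselect (C U)) => cu.
    by have [V oV e] := hC U cu K cK; exists V.
  by exists setT.
have [f hf] := choice hV.
have [s [hs cs]] : exists s : seq (set T),
   (forall V, LIn V s -> exists2 U, C U & V = f U) /\
   K `<=` (fun x => exists2 U, LIn U s & U x).
  apply: cK.
- by move=> V [U cu ->]; exact: (hf U cu).1.
- move=> y ky; have [U cu uy] := cov y ky; exists (f U); first by exists U.
  have : (U `&` K) y by []. by rewrite (hf U cu).2 => -[].
suff [s' [h1 h2]] : exists s' : seq (set T), (forall U, LIn U s' -> C U) /\
     forall V, LIn V s -> exists2 U, LIn U s' & V = f U.
    exists s'; split => // y ky; have [V /h2 [U us' ->] fy] := cs y ky.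
    exists U => //; have : (f U `&` K) y by [].
    by rewrite -(hf U (h1 U us')).2 => -[].
  elim: s hs {cs} => [|V s IH] hs; first by exists [::].
  have [s' [h1 h2]] := IH (fun W hW => hs W (or_intror hW)).
  have [U cu eV] := hs V (or_introl erefl).
  exists (U :: s'); split; first by move=> W [<-|hW] //; apply: h1.
  move=> W [<-|hW]; first by exists U => //; left.
  by have [U' h' ->] := h2 W hW; exists U' => //; right.
Qed.

Lemma compact_image X Y (oX : topology X) (oY : topology Y) (h : X -> Y) K :
  compact_in oX K -> cont oX oY h -> compact_in oY (h @` K).
Proof.
move=> cK ch C hC cov.
have hU : forall x, exists U, K x -> C U /\ U (h x).
  move=> x; case: (pselect (K x)) => kx; last by exists setT.
  by have [U cu uh] := cov (h x) (ex_intro2 _ _ x kx erefl); exists U.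
have [f hf] := choice hU.
have [xs [h1 h2]] := compact_pts (N := fun x => h @^-1` f x) cK
  (fun x kx => conj (ch _ (hC _ (hf x kx).1)) (hf x kx).2).
exists (map f xs); split.
- move=> U /Stdlib.Lists.List.in_map_iff [x [<- hx]]; exact: (hf x (h1 x hx)).1.
- move=> y [x kx <-]; have [z [hz fz]] := h2 x kx; exists (f z) => //.
  by apply: Stdlib.Lists.List.in_map.
Qed.

Lemma compact_diff T (o : topology T) K B :
  compact_in o K -> o B -> compact_in o (K `&` ~` B).
Proof.
move=> cK oB C hC cov.
have [s [hs cs]] : exists s : seq (set T),
   (forall U, LIn U s -> C U \/ U = B) /\ K `<=` (fun x => exists2 U, LIn U s & U x).
  apply: cK.
  - by move=> U [cu|->]; [exact: hC|exact: oB].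
  - move=> y ky; case: (pselect (B y)) => by_.
      by exists B => //; right.
    by have [U cu uy] := cov y (conj ky by_); exists U => //; left.
suff [s' [h1 h2]] : exists s' : seq (set T), (forall U, LIn U s' -> C U) /\
   forall y, (exists2 U, LIn U s & U y) -> ~ B y -> exists2 U, LIn U s' & U y.
  by exists s'; split => // y [ky nb]; apply: h2 => //; apply: cs.
elim: s hs {cs} => [|U s IH] hs.
  by exists [::]; split => // y [].
have [s' [h1 h2]] := IH (fun W hW => hs W (or_intror hW)).
case: (hs U (or_introl erefl)) => [cu|eU].
- exists (U :: s'); split; first by move=> W [<-|hW] //; apply: h1.
  move=> y [W hW wy] nb; case: hW => [eW|hW].
    by exists U; [left | rewrite eW].
  by have [W' h' w'] := h2 y (ex_intro2 _ _ W hW wy) nb; exists W' => //; right.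
- exists s'; split => // y [W hW wy] nb; case: hW => [eW|hW].
    by rewrite -eW eU in wy.
  exact: h2 y (ex_intro2 _ _ W hW wy) nb.
Qed.

Lemma cont_kfy X Y (oX : topology X) (oY : topology Y) h :
  cont (kfy oX) oY h -> cont (kfy oX) (kfy oY) h.
Proof.
move=> ch U kU K cK.
have cK' := compact_kfy cK.
have [W oW eW] := kU _ (compact_image cK' ch).
have [V oV eV] := ch W oW K cK.
exists V => //; rewrite -eV; apply: seteq => x; split => -[p kx]; split => //.
- have : (U `&` (h @` K)) (h x) by split => //; exists x.
  by rewrite eW => -[].
- have : (W `&` (h @` K)) (h x) by split => //; exists x.
  by rewrite -eW => -[].
Qed.

Lemma cont_gen D T (oD : topology D) (S : set (set T)) f :
  is_topology oD -> (forall V, S V -> oD (f @^-1` V)) -> cont oD (gen_top S) f.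
Proof.
move=> hD hS W gW.
have hs : forall d, exists s : seq (set T), W (f d) ->
  [/\ forall V, LIn V s -> S V, forall V, LIn V s -> V (f d) &
        (fun y => forall V, LIn V s -> V y) `<=` W].
  move=> d; case: (pselect (W (f d))) => wd; last by exists [::].
  by have [s hs] := gW _ wd; exists s.
have [g hg] := choice hs.
have -> : f @^-1` W = (fun y => exists d, W (f d) /\
                         (fun z => forall V, LIn V (g d) -> (f @^-1` V) z) y).
  apply: seteq => y; split.
  - by move=> wy; exists y; split => //; have [] := hg y wy.
  - by move=> [d [wd hy]]; have [_ _ h3] := hg d wd; apply: h3.
apply: open_idx => // d wd; apply: open_bigI => // V hV.
by apply: hS; have [h1 _ _] := hg d wd; apply: h1.
Qed.

Lemma gen_topology T (S : set (set T)) : is_topology (gen_top S).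
Proof.
split; first by move=> x _; exists [::].
split.
- move=> U V gU gV x [ux vx].
  have [s1 [a1 b1 c1]] := gU x ux; have [s2 [a2 b2 c2]] := gV x vx.
  exists (s1 ++ s2); split.
  + by move=> W /Stdlib.Lists.List.in_app_iff [] ?; [apply: a1|apply: a2].
  + by move=> W /Stdlib.Lists.List.in_app_iff [] ?; [apply: b1|apply: b2].
  + move=> y hy; split; [apply: c1 | apply: c2] => W hW; apply: hy;
      apply/Stdlib.Lists.List.in_app_iff; tauto.
- move=> F hF x [U fu ux]; have [s [a b c]] := hF U fu x ux.
  by exists s; split => // y hy; exists U => //; apply: c.
Qed.

Lemma kfy_topology T (o : topology T) : is_topology o -> is_topology (kfy o).
Proof.
move=> ho; split; first by move=> K _; exists setT => //; exact: open_setT.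
split.
- move=> U V kU kV K cK.
  have [U' oU eU] := kU K cK; have [V' oV eV] := kV K cK.
  exists (U' `&` V'); first exact: open_setI.
  apply: seteq => x; split => -[[ux vx] kx].
  + have : (U `&` K) x by []. rewrite eU => -[? _].
    have : (V `&` K) x by []. rewrite eV => -[? _]. by [].
  + have : (U' `&` K) x by []. rewrite -eU => -[? _].
    have : (V' `&` K) x by []. rewrite -eV => -[? _]. by [].
- move=> F hF K cK.
  have hV : forall U, exists V, F U -> o V /\ U `&` K = V `&` K.
    move=> U; case: (pselect (F U)) => fu; last by exists setT.
    by have [V oV e] := hF U fu K cK; exists V.
  have [g hg] := choice hV.
  exists (fun y => exists U, F U /\ g U y).
    by apply: open_idx => // U fu; exact: (hg U fu).1.
  apply: seteq => x; split.
  + move=> [[U fu ux] kx]; split => //; exists U; split => //.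
    have : (U `&` K) x by []. by rewrite (hg U fu).2 => -[].
  + move=> [[U [fu gx]] kx]; split => //; exists U => //.
    have : (g U `&` K) x by []. by rewrite -(hg U fu).2 => -[].
Qed.

Lemma regular T (o : topology T) K x O :
  is_topology o -> hausdorff o -> compact_in o K -> o O -> O x ->
  exists P K', [/\ o P, P x, compact_in o K', K' `<=` O & P `&` K `<=` K'].
Proof.
move=> ho hs cK oO Ox.
have cZ := compact_diff cK oO.
have hf : forall z, exists AB : set T * set T, (K `&` ~` O) z ->
   [/\ o AB.1, o AB.2, AB.1 x, AB.2 z & forall w, ~ (AB.1 w /\ AB.2 w)].
  move=> z; case: (pselect ((K `&` ~` O) z)) => [[kz nz]|nz]; last by exists (setT, setT).
  have : x <> z by move=> e; apply: nz; rewrite -e.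
  by move/hs => [U [V [? ? ? ? ?]]]; exists (U, V).
have [f hf'] := choice hf.
have [zs [h1 h2]] := compact_pts (N := fun z => (f z).2) cZ
  (fun z hz => let: And5 _ b _ d _ := hf' z hz in conj b d).
exists (fun y => forall z, LIn z zs -> (f z).1 y),
       (K `&` ~` (fun y => exists z, LIn z zs /\ (f z).2 y)); split.
- by apply: open_bigI => // z hz; have [] := hf' z (h1 z hz).
- by move=> z hz; have [] := hf' z (h1 z hz).
- apply: compact_diff => //; apply: open_idx => // z hz.
  by have [] := hf' z (h1 z hz).
- move=> y [ky nb]; case: (pselect (O y)) => // ny; exfalso; apply: nb.
  exact: h2.
- move=> y [py ky]; split => // -[z [hz fz]].
  by have [_ _ _ _ dj] := hf' z (h1 z hz); apply: (dj y); split => //; apply: py.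
Qed.

Lemma box A B (oA : topology A) (oB : topology B) y1 y2 (s : seq (set (A * B))) :
  is_topology oA -> is_topology oB ->
  (forall V, LIn V s -> (exists2 U, oA U & V = (fun p => U p.1)) \/
                        (exists2 U, oB U & V = (fun p => U p.2))) ->
  (forall V, LIn V s -> V (y1, y2)) ->
  exists U1 U2, [/\ oA U1, oB U2, U1 y1, U2 y2 &
     forall z1 z2, U1 z1 -> U2 z2 -> forall V, LIn V s -> V (z1, z2)].
Proof.
move=> hA hB; elim: s => [|V s IH] hs hin.
  by exists setT, setT; split => //; apply: open_setT.
have [U1 [U2 [o1 o2 u1 u2 hU]]] := IH (fun W hW => hs W (or_intror hW))
   (fun W hW => hin W (or_intror hW)).
have vy := hin V (or_introl erefl).
case: (hs V (or_introl erefl)) => -[U oU eV].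
- exists (U1 `&` U), U2; split => //; first exact: open_setI.
    by split => //; rewrite eV in vy.
  move=> z1 z2 [h1 h2] h3 W [<-|hW]; first by rewrite eV.
  exact: hU.
- exists U1, (U2 `&` U); split => //; first exact: open_setI.
    by split => //; rewrite eV in vy.
  move=> z1 z2 h1 [h2 h3] W [<-|hW]; first by rewrite eV.
  exact: hU.
Qed.

Lemma cont_pair D A B (oD : topology D) (oA : topology A) (oB : topology B) f g :
  is_topology oD -> cont oD oA f -> cont oD oB g ->
  cont oD (prod_top oA oB) (fun d => (f d, g d)).
Proof.
move=> hD cf cg; apply: cont_gen => // V [[U oU ->]|[U oU ->]].
- exact: cf.
- exact: cg.
Qed.

Section Pairing.
Variables (X A T1 T2 : Type) (oX : topology X) (oA : topology A)
  (o1 : topology T1) (o2 : topology T2).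
Hypotheses (hX : is_topology oX) (hsX : hausdorff oX) (hA : is_topology oA).
Variables (a : T1 -> X -> A) (b : T2 -> X -> A).
Hypotheses (ca : forall F, cont oX oA (a F)) (cb : forall G, cont oX oA (b G)).
Arguments ca F [V]. Arguments cb G [V].
Hypotheses (oa : forall K U, compact_in oX K -> oA U ->
                  o1 (fun F => forall x, K x -> U (a F x)))
           (ob : forall K U, compact_in oX K -> oA U ->
                  o2 (fun G => forall x, K x -> U (b G x))).

Definition NN (K : set X) (W : set (A * A)) : set (T1 * T2) :=
  fun p => forall x, K x -> W (a p.1 x, b p.2 x).

Lemma pair0 K W : compact_in oX K -> prod_top oA oA W -> prod_top o1 o2 (NN K W).
Proof.
move=> cK gW p Np.
have hf : forall x, exists UU : set A * set A, K x ->
   [/\ oA UU.1, oA UU.2, UU.1 (a p.1 x), UU.2 (b p.2 x) &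
       forall z1 z2, UU.1 z1 -> UU.2 z2 -> W (z1, z2)].
  move=> x; case: (pselect (K x)) => kx; last by exists (setT, setT).
  have [s [s1 s2 s3]] := gW _ (Np x kx).
  have [U1 [U2 [? ? ? ? hU]]] := box hA hA s1 s2.
  by exists (U1, U2); split => // z1 z2 h1 h2; apply: s3; apply: hU.
have [f hf'] := choice hf.
have hg : forall x, exists PK : set X * set X, K x ->
   [/\ oX PK.1, PK.1 x, compact_in oX PK.2,
       PK.2 `<=` (a p.1 @^-1` (f x).1 `&` b p.2 @^-1` (f x).2) & PK.1 `&` K `<=` PK.2].
  move=> x; case: (pselect (K x)) => kx; last by exists (setT, setT).
  have [o1' o2' u1 u2 _] := hf' x kx.
  have [P [K' [? ? ? ? ?]]] := regular (x := x) (O := a p.1 @^-1` (f x).1 `&` b p.2 @^-1` (f x).2)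
     hX hsX cK (open_setI hX (ca p.1 o1') (cb p.2 o2')) (conj u1 u2).
  by exists (P, K').
have [g hg'] := choice hg.
have [xs [h1 h2]] := compact_pts (N := fun x => (g x).1) cK
  (fun x kx => let: And5 a1 a2 _ _ _ := hg' x kx in conj a1 a2).
pose E1 x := fun q : T1 * T2 => forall y, (g x).2 y -> (f x).1 (a q.1 y).
pose E2 x := fun q : T1 * T2 => forall y, (g x).2 y -> (f x).2 (b q.2 y).
exists (Stdlib.Lists.List.flat_map (fun x => [:: E1 x; E2 x]) xs); split.
- move=> V /Stdlib.Lists.List.in_flat_map [x [hx [<-|[<-|[]]]]];
    have [? ? c3 _ _] := hg' x (h1 x hx); have [? ? _ _ _] := hf' x (h1 x hx).
  + by left; exists (fun F => forall y, (g x).2 y -> (f x).1 (a F y)); [apply: oa|].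
  + by right; exists (fun F => forall y, (g x).2 y -> (f x).2 (b F y)); [apply: ob|].
- move=> V /Stdlib.Lists.List.in_flat_map [x [hx [<-|[<-|[]]]]];
    have [_ _ _ c4 _] := hg' x (h1 x hx); move=> y /c4 [].
  + by [].
  + by [].
- move=> q hq y ky; have [x [hx py]] := h2 y ky.
  have [_ _ _ _ c5] := hg' x (h1 x hx); have [_ _ _ _ hW] := hf' x (h1 x hx).
  have gy : (g x).2 y by apply: c5.
  apply: hW.
  + by apply: (hq (E1 x)) => //; apply/Stdlib.Lists.List.in_flat_map; exists x; split => //; left.
  + by apply: (hq (E2 x)) => //; apply/Stdlib.Lists.List.in_flat_map; exists x; split => //; right; left.
Qed.

Definition SS (K : set X) (Q : set (T1 * T2)) : set (A * A) :=
  fun z => exists p x, [/\ Q p, K x & z = (a p.1 x, b p.2 x)].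

Lemma SS_compact K Q : compact_in oX K -> compact_in (prod_top o1 o2) Q ->
  compact_in (prod_top oA oA) (SS K Q).
Proof.
move=> cK cQ C hC cov.
have hs : forall p, exists s : seq (set (A * A)), Q p ->
   (forall U, LIn U s -> C U) /\
   (fun x => (a p.1 x, b p.2 x)) @` K `<=` (fun z => exists2 U, LIn U s & U z).
  move=> p; case: (pselect (Q p)) => qp; last by exists [::].
  have cI := compact_image cK (cont_pair hX (ca p.1) (cb p.2)).
  have cov' : (fun x => (a p.1 x, b p.2 x)) @` K `<=` \bigcup_(U in C) U.
    by move=> z [x kx e]; apply: cov; exists p, x; split.
  have [s hs] := cI C hC cov'.
  by exists s.
have [h hh] := choice hs.
have hP : is_topology (prod_top oA oA) := gen_topology _.
have hN : forall p, Q p -> prod_top o1 o2 (NN K (fun z => exists U, LIn U (h p) /\ U z))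
     /\ NN K (fun z => exists U, LIn U (h p) /\ U z) p.
  move=> p qp; split.
  - apply: pair0 => //; apply: open_idx => // U hU.
    exact: hC ((hh p qp).1 U hU).
  - move=> x kx; have [U hU uz] := (hh p qp).2 (a p.1 x, b p.2 x) (ex_intro2 _ _ x kx erefl).
    by exists U.
have [ps [h1 h2]] := compact_pts cQ hN.
exists (Stdlib.Lists.List.flat_map h ps); split.
- move=> U /Stdlib.Lists.List.in_flat_map [p [hp hU]]; exact: (hh p (h1 p hp)).1 U hU.
- move=> z [p [x [qp kx ->]]]; have [p' [hp' Np']] := h2 p qp.
  have [U [hU uz]] := Np' x kx; exists U => //.
  by apply/Stdlib.Lists.List.in_flat_map; exists p'.
Qed.

Lemma pair_main K W : compact_in oX K -> kprod oA oA W -> kfy (prod_top o1 o2) (NN K W).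
Proof.
move=> cK kW Q cQ.
have cS := SS_compact cK cQ.
have [W' oW' eW] := kW _ cS.
exists (NN K W'); first exact: pair0.
apply: seteq => p; split => -[Np qp]; split => // x kx.
- have : (W `&` SS K Q) (a p.1 x, b p.2 x) by split; [apply: Np | exists p, x].
  by rewrite eW => -[].
- have : (W' `&` SS K Q) (a p.1 x, b p.2 x) by split; [apply: Np | exists p, x].
  by rewrite -eW => -[].
Qed.
End Pairing.

Lemma kspace_cont X Y (oX : topology X) (oY : topology Y) h :
  is_kspace oX -> cont (kfy oX) oY h -> cont oX oY h.
Proof. by move=> [_ _ hk] c V oV; apply: hk; apply: c. Qed.

Lemma const_cont X Y (oX : topology X) (oY : topology Y) (y : Y) :
  is_topology oX -> cont oX oY (fun _ => y).
Proof.
move=> hX V _; case: (pselect (V y)) => vy.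
- have -> : (fun _ : X => y) @^-1` V = setT by apply: seteq.
  exact: open_setT.
- have -> : (fun _ : X => y) @^-1` V = set0 by apply: seteq.
  exact: open_set0.
Qed.

Theorem mainTheorem5 (C D : kcat) :
  is_kcat C -> is_kcat D -> nonempty_kcat C -> perfect D ->
  perfect_data (FuncOb_top C D) (FuncMor_top C D) (@tdom C D) (@tcod C D).
Proof.
move=> hCC hDD _ hP.
case: hCC => kObC kMorC [csrcC ctgtC cidmC ccompC] _.
case: hDD => kObD kMorD [csrcD ctgtD cidmD ccompD] [lid lcomp lunit lassoc].
case: hP => -[d0] [g [gK [Kg [cst cg]]]].
have tObC : is_topology (topOb C) by case: kObC.
have tObD : is_topology (topOb D) by case: kObD.
have tMorC : is_topology (topMor C) by case: kMorC.
have tMorD : is_topology (topMor D) by case: kMorD.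
have hsObC : hausdorff (topOb C) by case: kObC.
have gs : forall p, src (g p) = p.1 by move=> p; have := Kg p; case: p => ? ? [].
have gt : forall p, tgt (g p) = p.2 by move=> p; have := Kg p; case: p => ? ? [].
have inj : forall m1 m2 : Mor D, src m1 = src m2 -> tgt m1 = tgt m2 -> m1 = m2.
  by move=> m1 m2 e1 e2; rewrite -(gK m1) -(gK m2) /= e1 e2.
split.
  constructor.
  have ax : is_functor (fun _ : Ob C => d0) (fun _ : Mor C => idm d0).
    split => //.
    - by move=> f; case: (lid d0).
    - by move=> f; case: (lid d0).
    - by move=> f h _; have [_ hu] := lunit (idm d0); have [_ e] := lid d0; rewrite e in hu.
  by apply: (@CFunctor C D _ _ ax); apply: const_cont.
pose eta (F G : cfunctor C D) x := g (fo F x, fo G x).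
have eta_cont : forall F G, cont (topOb C) (topMor D) (eta F G).
  move=> F G; apply: (cont_comp (oY := kprod (topOb D) (topOb D))) => //.
  apply: kspace_cont => //; apply: cont_kfy; apply: cont_kfy_dom.
  by apply: cont_pair => //; apply: fo_cont.
have eta_src : forall F G x, src (eta F G x) = fo F x by move=> *; rewrite gs.
have eta_tgt : forall F G x, tgt (eta F G x) = fo G x by move=> *; rewrite gt.
have eta_nat : forall (F G : cfunctor C D) f,
    Defs.comp (fm F f) (eta F G (tgt f)) = Defs.comp (eta F G (src f)) (fm G f).
  move=> F G f; case: (fun_ax F) => sF tF _ _; case: (fun_ax G) => sG tG _ _.
  have c1 : tgt (fm F f) = src (eta F G (tgt f)) by rewrite eta_src tF.
  have c2 : tgt (eta F G (src f)) = src (fm G f) by rewrite eta_tgt sG.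
  have [a1 a2] := lcomp _ _ c1; have [b1 b2] := lcomp _ _ c2.
  apply: inj; first by rewrite a1 b1 sF eta_src.
  by rewrite a2 b2 tG eta_tgt.
pose sigma (p : cfunctor C D * cfunctor C D) : ctrans C D :=
  @CTrans C D p.1 p.2 (eta p.1 p.2) (eta_cont p.1 p.2) (eta_src p.1 p.2)
     (eta_tgt p.1 p.2) (eta_nat p.1 p.2).
exists sigma; split; [|split; [|split]].
- case=> F G e ec es et en; rewrite /sigma /=.
  have ee : e = eta F G.
    by apply: funext => x; apply: inj; rewrite ?eta_src ?eta_tgt.
  subst e.
  have -> : ec = eta_cont F G by apply: Prop_irrelevance.
  have -> : es = eta_src F G by apply: Prop_irrelevance.
  have -> : et = eta_tgt F G by apply: Prop_irrelevance.
  have -> : en = eta_nat F G by apply: Prop_irrelevance.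
  by [].
- by case.
-
  apply: cont_kfy; apply: cont_kfy_dom => W oW.
  exists (fun q => W q.1) => //.
  apply: kfy_ge => q wq; exists [:: fun q => W q.1]; split.
  + by move=> V [<-|[]]; left; exists W => //; apply: kfy_ge.
  + by move=> V [<-|[]].
  + by move=> y hy; exact: (hy _ (or_introl erefl)).
- have hdom : is_topology (kfy (prod_top (FuncOb_top C D) (FuncOb_top C D))).
    by apply: kfy_topology; apply: gen_topology.
  apply: cont_kfy => U [V oV ->].
  suff : cont (kfy (prod_top (FuncOb_top C D) (FuncOb_top C D)))
     (kprod (kprod (FuncOb_top C D) (FuncOb_top C D))
            (@cmap_top _ _ (topOb C) (topMor D)))
     (fun p => ((p.1, p.2), exist _ (eta p.1 p.2) (eta_cont p.1 p.2)
                 : cmap (topOb C) (topMor D))).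
    by move/(_ V oV).
  apply: cont_kfy; apply: cont_pair => //.
  + move=> W oW.
    have -> : (fun p : cfunctor C D * cfunctor C D => (p.1, p.2)) @^-1` W = W.
      by apply: seteq; case.
    exact: oW.
  + apply: cont_kfy; apply: cont_gen => // V' [K [U' [cK oU ->]]].
    have oa : forall K U, compact_in (topOb C) K -> topOb D U ->
        FuncOb_top C D (fun F => forall x, K x -> U (fo F x)).
      move=> K0 U0 cK0 oU0; apply: kfy_ge.
      exists (fun phi : cmap (topMor C) (topMor D) =>
               forall m, (idm @` K0) m -> (src @^-1` U0) (sval phi m)).
        apply: kfy_ge => phi hphi; exists [:: fun phi : cmap (topMor C) (topMor D) =>
               forall m, (idm @` K0) m -> (src @^-1` U0) (sval phi m)]; split.
        * move=> W [<-|[]]; exists (idm @` K0), (src @^-1` U0); split => //.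
            exact: compact_image cK0 cidmC.
          exact: csrcD _ oU0.
        * by move=> W [<-|[]].
        * by move=> y hy; exact: (hy _ (or_introl erefl)).
      apply: seteq => F; case: (fun_ax F) => sF _ iF _; split.
      - move=> h m [x kx <-]; rewrite /= iF; case: (lid (fo F x)) => -> _.
        exact: h.
      - move=> h x kx; have := h (idm x) (ex_intro2 _ _ x kx erefl).
        by rewrite /= iF; case: (lid (fo F x)) => -> _.
    have := @pair_main (Ob C) (Ob D) _ _ (topOb C) (topOb D) (FuncOb_top C D) (FuncOb_top C D)
       tObC hsObC tObD (fun F => fo F) (fun F => fo F) (fun F => @fo_cont C D F)
       (fun F => @fo_cont C D F) oa oa K (g @^-1` U') cK (cg _ oU).
    by [].
Qed.
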